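(* Let $P\subset\mathbb R^d$ be a $d$-polytope, $S$ a simplex facet of $P$, and $\mathcal F,\mathcal N\subseteq\operatorname{adj}(S)$ disjoint with $V_S(\mathcal F,\mathcal N;P)\neq\emptyset$. Then for any two points $v,w\in V_S(\mathcal F,\mathcal N;P)$ the polytopes $\operatorname{conv}(P\cup\{v\})$ and $\operatorname{conv}(P\cup\{w\})$ are combinatorially equivalent.
   Context: For a facet $F$ of $P$ let $H_F=\{x:\langle x,a_F\rangle=\ell_F\}$ be its affine hull, oriented so that $P\subseteq\{x:\langle x,a_F\rangle\geq\ell_F\}$; put $H_F^+=\{x:\langle x,a_F\rangle>\ell_F\}$, $H_F^-=\{x:\langle x,a_F\rangle<\ell_F\}$. $\operatorname{adj}(S)$ is the set of facets sharing a ridge with $S$. A simplex facet is a facet combinatorially equivalent to a $(d-1)$-simplex. $V_S(\mathcal F,\mathcal N;P)$ is the set of points lying in $H_F^-$ for $F\in\mathcal N\cup\{S\}$, in $H_F$ for $F\in\mathcal F$, and in $H_F^+$ for all other facets $F$ of $P$. *)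

(* Defs.v *)
From HB Require Import structures.
From mathcomp Require Import all_boot all_order all_algebra.
From mathcomp Require Import boolp classical_sets reals.
Set Implicit Arguments. Unset Strict Implicit. Unset Printing Implicit Defensive.
Import Order.TTheory GRing.Theory Num.Theory.
Local Open Scope ring_scope.
Local Open Scope classical_set_scope.

Section Polytopes.
Variables (R : realType) (d : nat).
Local Notation vec := 'rV[R]_d.

Definition dotp (x a : vec) : R := \sum_(i < d) x 0 i * a 0 i.

Definition conv (X : set vec) : set vec :=
  [set x | exists (n : nat) (p : 'I_n -> vec) (lam : 'I_n -> R),
     [/\ forall i, X (p i), forall i, 0 <= lam i,
         \sum_i lam i = 1 & x = \sum_i lam i *: p i]].

Definition aff (X : set vec) : set vec :=
  [set x | exists (n : nat) (p : 'I_n -> vec) (lam : 'I_n -> R),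
     [/\ forall i, X (p i), \sum_i lam i = 1 & x = \sum_i lam i *: p i]].

Definition polytope (P : set vec) : Prop :=
  exists V : seq vec, P = conv [set x | x \in V].

Definition aff_indep_in (X : set vec) (n : nat) : Prop :=
  exists p : 'I_n -> vec, (forall i, X (p i)) /\
    forall lam : 'I_n -> R, \sum_i lam i = 0 -> \sum_i lam i *: p i = 0 ->
      forall i, lam i = 0.

(* (affine) dimension of X is k (k = -1 for the empty set) *)
Definition has_dim (X : set vec) (k : int) : Prop :=
  exists n : nat, [/\ k + 1 = n%:Z, aff_indep_in X n & ~ aff_indep_in X n.+1].

Definition valid_ineq (P : set vec) (a : vec) (l : R) : Prop :=
  forall x, P x -> l <= dotp x a.

(* faces of P (including the empty face and P itself) *)
Definition face (P F : set vec) : Prop :=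
  exists (a : vec) (l : R), valid_ineq P a l /\ F = [set x | P x /\ dotp x a = l].

Definition facet (P F : set vec) : Prop :=
  [/\ face P F, F <> P & has_dim F (d%:Z - 1)].

Definition ridge (P F : set vec) : Prop := face P F /\ has_dim F (d%:Z - 2).

(* (a,l) describes the affine hull H_F = {x | <x,a> = l} of F, oriented so
   that P lies in {x | <x,a> >= l} *)
Definition facet_hyp (P F : set vec) (a : vec) (l : R) : Prop :=
  [/\ a != 0, valid_ineq P a l & forall x, aff F x <-> dotp x a = l].

Definition in_Hminus (P F : set vec) (x : vec) : Prop :=
  exists a l, facet_hyp P F a l /\ dotp x a < l.
Definition in_H (P F : set vec) (x : vec) : Prop :=
  exists a l, facet_hyp P F a l /\ dotp x a = l.
Definition in_Hplus (P F : set vec) (x : vec) : Prop :=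
  exists a l, facet_hyp P F a l /\ l < dotp x a.

Definition adj (P S : set vec) : set (set vec) :=
  [set F | [/\ facet P F, F <> S & ridge P (S `&` F)]].

Definition VS (P S : set vec) (Fs Ns : set (set vec)) : set vec :=
  [set x | [/\ in_Hminus P S x,
              forall F, Ns F -> in_Hminus P F x,
              forall F, Fs F -> in_H P F x &
              forall F, facet P F -> F <> S -> ~ Fs F -> ~ Ns F -> in_Hplus P F x]].

Definition comb_equiv (P Q : set vec) : Prop :=
  exists f : set vec -> set vec,
    [/\ forall F, face P F -> face Q (f F),
        forall G, face Q G -> exists F, face P F /\ f F = G &
        forall F1 F2, face P F1 -> face P F2 -> (F1 `<=` F2 <-> f F1 `<=` f F2)].

Definition std_simplex : set vec :=
  conv [set x | exists i : 'I_d, x = delta_mx 0 i].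

Definition simplex_facet (P S : set vec) : Prop :=
  facet P S /\ comb_equiv S std_simplex.

End Polytopes.

(* Main.v *)
Require Import Defs.
From HB Require Import structures.
From mathcomp Require Import all_boot all_order all_algebra.
From mathcomp Require Import boolp classical_sets reals.
From mathcomp Require Import ring lra zify.
Import Order.TTheory GRing.Theory Num.Theory.
Local Open Scope ring_scope.
Local Open Scope classical_set_scope.

Set Implicit Arguments. Unset Strict Implicit. Unset Printing Implicit Defensive.

Section Basic.
Variables (R : realType) (d : nat).
Local Notation vec := 'rV[R]_d.

Lemma dotpD (x y a : vec) : dotp (x + y) a = dotp x a + dotp y a.
Proof. by rewrite /dotp -big_split; apply: eq_bigr => i _; rewrite mxE mulrDl. Qed.
Lemma dotpZ (c : R) (x a : vec) : dotp (c *: x) a = c * dotp x a.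
Proof. by rewrite /dotp mulr_sumr; apply: eq_bigr => i _; rewrite mxE mulrA. Qed.
Lemma dotp0 (a : vec) : dotp 0 a = 0.
Proof. by rewrite /dotp big1 // => i _; rewrite mxE mul0r. Qed.
Lemma dotpN (x a : vec) : dotp (- x) a = - dotp x a.
Proof. by rewrite -scaleN1r dotpZ mulN1r. Qed.
Lemma dotpB (x y a : vec) : dotp (x - y) a = dotp x a - dotp y a.
Proof. by rewrite dotpD dotpN. Qed.
Lemma dotp_sum n (lam : 'I_n -> R) (q : 'I_n -> vec) a :
  dotp (\sum_i lam i *: q i) a = \sum_i lam i * dotp (q i) a.
Proof.
rewrite (big_morph (fun x => dotp x a) (fun x y => dotpD x y a) (dotp0 a)).
by apply: eq_bigr => i _; rewrite dotpZ.
Qed.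
Lemma dotp_a0 (x : vec) : dotp x 0 = 0.
Proof. by rewrite /dotp big1 // => i _; rewrite mxE mulr0. Qed.
Lemma dotp_aD (x a b : vec) : dotp x (a + b) = dotp x a + dotp x b.
Proof. by rewrite /dotp -big_split; apply: eq_bigr => i _; rewrite mxE mulrDr. Qed.
Lemma dotp_aZ c (x a : vec) : dotp x (c *: a) = c * dotp x a.
Proof. by rewrite /dotp mulr_sumr; apply: eq_bigr => i _; rewrite mxE mulrCA. Qed.

Definition cvs (s : seq vec) : set vec :=
  [set x | exists lam : 'I_(size s) -> R,
     [/\ forall i, 0 <= lam i, \sum_i lam i = 1 & x = \sum_i lam i *: nth 0 s i]].

Lemma cvs_conv (s : seq vec) (X : set vec) :
  (forall i : 'I_(size s), X (nth 0 s i)) -> cvs s `<=` conv X.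
Proof. move=> HX x [lam [H0 H1 ->]]; exists (size s), (fun i => nth 0 s i), lam; by split. Qed.

Lemma cvs_nth (s : seq vec) (i : 'I_(size s)) : cvs s (nth 0 s i).
Proof.
exists (fun j => (j == i)%:R); split.
- by move=> j; rewrite ler0n.
- by rewrite (bigD1 i) //= big1 ?addr0 ?eqxx // => j /negPf ->.
- by rewrite (bigD1 i) //= big1 ?addr0 ?eqxx ?scale1r // => j /negPf ->; rewrite scale0r.
Qed.

Lemma conv_sub (s : seq vec) (X : set vec) :
  (forall x, X x -> cvs s x) -> conv X `<=` cvs s.
Proof.
move=> HX x [m [q [lam [Xq H0 H1 ->]]]].
have /choice [mu Hmu] : forall i : 'I_m, exists mu : 'I_(size s) -> R,
   [/\ forall j, 0 <= mu j, \sum_j mu j = 1 & q i = \sum_j mu j *: nth 0 s j].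
  by move=> i; case: (HX _ (Xq i)) => mu Hm; exists mu.
exists (fun j => \sum_i lam i * mu i j); split.
- by move=> j; apply: sumr_ge0 => i _; apply: mulr_ge0 => //; case: (Hmu i).
- rewrite exchange_big /= -H1; apply: eq_bigr => i _.
  by rewrite -mulr_sumr; case: (Hmu i) => _ -> _; rewrite mulr1.
- have Hq : forall i, q i = \sum_j mu i j *: nth 0 s j by move=> i; case: (Hmu i).
  under eq_bigr => i _ do rewrite Hq scaler_sumr.
  rewrite exchange_big /=; apply: eq_bigr => j _.
  by rewrite scaler_suml; apply: eq_bigr => i _; rewrite scalerA.
Qed.

Lemma conv_ext (X : set vec) : X `<=` conv X.
Proof.
move=> x Xx; exists 1%N, (fun _ => x), (fun _ => 1); split => //.
- by rewrite big_ord1.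
- by rewrite big_ord1 scale1r.
Qed.

Lemma conv_mono (X Y : set vec) : X `<=` Y -> conv X `<=` conv Y.
Proof. move=> XY x [m [q [lam [Xq H0 H1 ->]]]]; exists m, q, lam; split => // i; exact: XY. Qed.

Lemma conv_valid (X : set vec) a l :
  (forall x, X x -> l <= dotp x a) -> valid_ineq (conv X) a l.
Proof.
move=> HX x [m [q [lam [Xq H0 H1 ->]]]]; rewrite dotp_sum.
have -> : l = \sum_i lam i * l by rewrite -mulr_suml H1 mul1r.
by apply: ler_sum => i _; apply: ler_wpM2l => //; apply: HX.
Qed.

Lemma cvs_seq (s : seq vec) : conv [set x | x \in s] = cvs s.
Proof.
apply/seteqP; split.
- apply: conv_sub => x /= xs; rewrite -(nth_index 0 xs).
  have := xs; rewrite -index_mem => Hi.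
  exact: (cvs_nth (Ordinal Hi)).
- apply: cvs_conv => i /=; exact: mem_nth.
Qed.

Lemma cvs_cons (s : seq vec) (v : vec) : conv (cvs s `|` [set v]) = cvs (v :: s).
Proof.
apply/seteqP; split.
- apply: conv_sub => x [[lam [H0 H1 ->]]|->]; last exact: (cvs_nth (s := v :: s) ord0).
  exists (fun j : 'I_(size s).+1 => if unlift ord0 j is Some k then lam k else 0); split.
  + by move=> j; case: unliftP.
  + by rewrite big_ord_recl unlift_none add0r; under eq_bigr => i _ do rewrite liftK.
  + rewrite big_ord_recl unlift_none scale0r add0r.
    by apply: eq_bigr => i _; rewrite liftK.
- apply: cvs_conv => i; case: i => [[|i] Hi] /=; first by right.
  left; exact: (cvs_nth (Ordinal (Hi : i < size s)%N)).
Qed.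

End Basic.

Set Implicit Arguments. Unset Strict Implicit. Unset Printing Implicit Defensive.

Section LinAlg.
Variables (R : realType) (d : nat).
Local Notation vec := 'rV[R]_d.

Definition aug (x : vec) : 'rV[R]_(d + 1) := row_mx x (1%:M : 'M_1).
Definition zc (a : vec) (k : R) : 'cV[R]_(d + 1) := col_mx a^T (- k%:M : 'M_1).
Definition valz (z : 'cV[R]_(d + 1)) (x : vec) : R := (aug x *m z) 0 0.
Definition zb (z : 'cV[R]_(d + 1)) : vec := (usubmx z)^T.
Definition zk (z : 'cV[R]_(d + 1)) : R := - (dsubmx z) 0 0.

Lemma mulmx_tr_dotp (x a : vec) : x *m a^T = (dotp x a)%:M.
Proof.
rewrite [LHS]mx11_scalar; congr (_ %:M).
by rewrite !mxE /dotp; apply: eq_bigr => i _; rewrite mxE.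
Qed.

Lemma valz_zc a k x : valz (zc a k) x = dotp x a - k.
Proof.
rewrite /valz /aug /zc mul_row_col mulmx_tr_dotp mul1mx.
by rewrite !mxE !eqxx /= mulr1n.
Qed.

Lemma zcK z : zc (zb z) (zk z) = z.
Proof.
rewrite /zc /zb /zk trmxK.
have -> : (- (- dsubmx z 0 0)%:M : 'M_1) = dsubmx z.
  by apply/matrixP => i j; rewrite !ord1 !mxE eqxx mulr1n opprK.
exact: vsubmxK.
Qed.

Lemma valzE z x : valz z x = dotp x (zb z) - zk z.
Proof. by rewrite -{1}(zcK z) valz_zc. Qed.

Lemma valzD z1 z2 x : valz (z1 + z2) x = valz z1 x + valz z2 x.
Proof. by rewrite /valz mulmxDr mxE. Qed.
Lemma valzZ c z x : valz (c *: z) x = c * valz z x.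
Proof. by rewrite /valz -scalemxAr mxE. Qed.

Lemma valz_aff z n (lam : 'I_n -> R) (q : 'I_n -> vec) :
  \sum_i lam i = 1 -> valz z (\sum_i lam i *: q i) = \sum_i lam i * valz z (q i).
Proof.
move=> H1; rewrite !valzE dotp_sum.
under [RHS]eq_bigr => i _ do rewrite valzE mulrBr.
by rewrite sumrB -mulr_suml H1 mul1r.
Qed.

Lemma aug_mul0 z x : (aug x *m z == 0) = (valz z x == 0).
Proof.
apply/eqP/eqP => [H|H]; first by rewrite /valz H mxE.
by apply/matrixP => i j; rewrite !ord1; move: H; rewrite /valz => ->; rewrite mxE.
Qed.

Lemma mul_aug_mx m (u : 'rV[R]_m) (c : 'I_m -> R) (q : 'I_m -> vec) :
  u *m (\matrix_i (c i *: aug (q i))) =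
  row_mx (\sum_i (u 0 i * c i) *: q i) ((\sum_i u 0 i * c i)%:M).
Proof.
rewrite mulmx_sum_row.
under eq_bigr => i _ do rewrite rowK scalerA /aug scale_row_mx scalemx1.
elim/big_rec3: _ => [|i A B C _ ->]; first by rewrite (raddf0 (@scalar_mx R 1)) row_mx0.
by rewrite add_row_mx (raddfD (@scalar_mx R 1)).
Qed.

Lemma zc_neq0 a k : a != 0 -> zc a k != 0.
Proof. by move=> Ha; rewrite col_mx_eq0 negb_and trmx_eq0 Ha. Qed.

Lemma rank_kerz (z : 'cV[R]_(d + 1)) : z != 0 -> \rank (kermx z) = d.
Proof.
move=> Hz; rewrite mxrank_ker.
have : \rank z = 1%N.
  apply/eqP; rewrite eqn_leq rank_leq_col lt0n mxrank_eq0 Hz //.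
by move=> ->; rewrite addnK.
Qed.

Lemma hyp_dep a k (q : 'I_d.+1 -> vec) : a != 0 -> (forall i, dotp (q i) a = k) ->
  exists lam : 'I_d.+1 -> R, [/\ \sum_i lam i = 0, \sum_i lam i *: q i = 0 & exists i, lam i != 0].
Proof.
move=> Ha Hq.
pose N := \matrix_i (1 *: aug (q i)).
have NZ : N *m zc a k = 0.
  apply/row_matrixP => i; rewrite row_mul rowK row0 scale1r; apply/eqP.
  by rewrite aug_mul0 valz_zc Hq subrr.
have rN : (\rank N <= d)%N.
  have S : (N <= kermx (zc a k))%MS by apply/sub_kermxP.
  by have := mxrankS S; rewrite rank_kerz // zc_neq0.
have : kermx N != 0.
  rewrite kermx_eq0 /row_free; apply/negP => /eqP H; move: rN; rewrite H ltnn //.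
move=> /eqP KN.
have [i Hi] : exists i, row i (kermx N) != 0.
  apply/existsP; rewrite -negb_forall; apply/negP => /forallP H; apply: KN.
  by apply/row_matrixP => i; rewrite row0; apply/eqP; exact: H.
have := mulmx_ker N; move=> /(congr1 (row i)); rewrite row_mul row0 mul_aug_mx.
move=> /eqP; rewrite row_mx_eq0 => /andP [/eqP H1 /eqP H2].
exists (fun j => row i (kermx N) 0 j); split.
- move: H2 => /matrixP /(_ 0 0); rewrite !mxE eqxx mulr1n.
  by under eq_bigr => j _ do rewrite mulr1.
- by rewrite -[RHS]H1; apply: eq_bigr => j _; rewrite mulr1.
- by apply/rV0Pn.
Qed.

End LinAlg.

Set Implicit Arguments. Unset Strict Implicit. Unset Printing Implicit Defensive.

Section Poly.
Variables (R : realType) (d : nat) (V : seq 'rV[R]_d).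
Local Notation vec := 'rV[R]_d.
Local Notation n := (size V).
Local Notation p := (fun j : 'I_(size V) => nth 0 V j).
Local Notation P := (cvs V).

Definition validz (z : 'cV[R]_(d + 1)) := forall j : 'I_n, 0 <= valz z (p j).
Definition tight (z : 'cV[R]_(d + 1)) (j : 'I_n) := valz z (p j) == 0.
Definition Mt (z : 'cV[R]_(d + 1)) : 'M[R]_(n, d + 1) :=
  \matrix_j ((tight z j)%:R *: aug (p j)).
Definition Fz (z : 'cV[R]_(d + 1)) : set vec := [set x | P x /\ valz z x = 0].

Lemma validz_P z x : validz z -> P x -> 0 <= valz z x.
Proof.
move=> Hz [lam [H0 H1 ->]]; rewrite valz_aff //.
by apply: sumr_ge0 => i _; apply: mulr_ge0.
Qed.

Lemma tight_sub z z' x : validz z -> (forall j, tight z j -> valz z' (p j) = 0) ->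
  Fz z x -> valz z' x = 0.
Proof.
move=> Hz Hzz' [[lam [H0 H1 ->]]]; rewrite !valz_aff // => /eqP.
rewrite psumr_eq0 => [/allP Hall|i _]; last by apply: mulr_ge0.
apply: big1 => i _; have /implyP := Hall i (mem_index_enum _).
rewrite mulf_eq0 => /(_ isT) /orP [/eqP ->|Hi]; first by rewrite mul0r.
by rewrite Hzz' ?mulr0.
Qed.

Lemma Fz_eq z z' : validz z -> validz z' -> (forall j, tight z j = tight z' j) ->
  Fz z = Fz z'.
Proof.
move=> Hz Hz' Ht; apply/seteqP; split => x Hx; split; try exact: Hx.1.
- by apply: (tight_sub Hz) Hx => j; rewrite Ht => /eqP.
- by apply: (tight_sub Hz') Hx => j; rewrite -Ht => /eqP.
Qed.

Lemma rowMt z j : row j (Mt z) = (tight z j)%:R *: aug (p j).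
Proof. by rewrite rowK. Qed.

Lemma Mt_mul z z' : (forall j, tight z j -> valz z' (p j) = 0) -> Mt z *m z' = 0.
Proof.
move=> H; apply/row_matrixP => j; rewrite row_mul rowMt row0 -scalemxAl.
case: (boolP (tight z j)) => Hj; last by rewrite scale0r.
by rewrite scale1r; apply/eqP; rewrite aug_mul0 H.
Qed.

Lemma Mt_mul_inv z z' j : Mt z *m z' = 0 -> tight z j -> valz z' (p j) = 0.
Proof.
move=> /(congr1 (row j)); rewrite row_mul rowMt row0 => + Hj; rewrite Hj scale1r.
by move/eqP; rewrite aug_mul0 => /eqP.
Qed.

Lemma sub_Mt z x : (aug x <= Mt z)%MS ->
  exists lam : 'I_n -> R, [/\ forall j, ~~ tight z j -> lam j = 0,
     \sum_j lam j = 1 & x = \sum_j lam j *: p j].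
Proof.
move=> /submxP [r Hr]; move: Hr; rewrite /Mt mul_aug_mx /aug => /eq_row_mx [H1 H2].
exists (fun j => r 0 j * (tight z j)%:R); split.
- by move=> j /negPf ->; rewrite mulr0.
- by move: H2 => /matrixP /(_ 0 0); rewrite !mxE eqxx mulr1n.
- exact: H1.
Qed.

Lemma sub_Mt_val z z' x : (aug x <= Mt z)%MS -> Mt z *m z' = 0 -> valz z' x = 0.
Proof.
move=> /submxP [r Hr] H; apply/eqP; rewrite -aug_mul0 Hr -mulmxA H mulmx0 //.
Qed.

Lemma rankMt z : z != 0 -> (\rank (Mt z) <= d)%N.
Proof.
move=> Hz; have S : (Mt z <= kermx z)%MS.
  by apply/sub_kermxP; apply: Mt_mul => j /eqP.
by have := mxrankS S; rewrite rank_kerz.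
Qed.

Lemma argmax_ex (I : finType) (P0 : pred I) (F : I -> R) (i0 : I) : P0 i0 ->
  exists i, P0 i /\ forall j, P0 j -> F j <= F i.
Proof.
move=> Hi0; case: (@arg_maxP _ _ I i0 P0 F Hi0) => i Pi Hi.
by exists i; split.
Qed.

Lemma argmin_ex (I : finType) (P0 : pred I) (F : I -> R) (i0 : I) : P0 i0 ->
  exists i, P0 i /\ forall j, P0 j -> F i <= F j.
Proof.
move=> Hi0; case: (@arg_minP _ _ I i0 P0 F Hi0) => i Pi Hi.
by exists i; split.
Qed.

Lemma twoD (m : nat) (A B : 'I_m -> R) (Xa Xb : R) :
  (forall j, 0 <= A j) -> (forall j, A j = 0 -> B j = 0) ->
  (forall al be, (forall j, al * A j + be * B j = 0) -> al = 0 /\ be = 0) ->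
  Xa < 0 ->
  exists al be, [/\ forall j, 0 <= al * A j + be * B j, al * Xa + be * Xb < 0 &
    exists j, 0 < A j /\ al * A j + be * B j = 0].
Proof.
move=> HA HAB Hind HX.
have [j0 Hj0] : exists j, 0 < A j.
  apply/not_existsP => H; have [] := Hind 1 0 => [j|]; last by move/eqP; rewrite oner_eq0.
  have Aj : A j = 0 by apply/eqP; rewrite eq_le HA andbT leNgt; apply/negP => /(H j).
  by rewrite Aj HAB // !mulr0 addr0.
have [j1 [Hj1 Hmax]] := @argmax_ex _ (fun j => 0 < A j) (fun j => B j / A j) j0 Hj0.
have [j2 [Hj2 Hmin]] := @argmin_ex _ (fun j => 0 < A j) (fun j => B j / A j) j0 Hj0.
set k1 := B j1 / A j1 in Hmax; set k2 := B j2 / A j2 in Hmin.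
have HAj j : A j != 0 -> 0 < A j by move=> H; rewrite lt_def H HA.
have V1 j : 0 <= k1 * A j + (-1) * B j.
  case: (eqVneq (A j) 0) => [Aj|/HAj Aj]; first by rewrite Aj HAB // !mulr0 addr0.
  have := Hmax _ Aj; rewrite ler_pdivrMr // mulN1r subr_ge0 //.
have V2 j : 0 <= (- k2) * A j + 1 * B j.
  case: (eqVneq (A j) 0) => [Aj|/HAj Aj]; first by rewrite Aj HAB // !mulr0 addr0.
  have := Hmin _ Aj; rewrite ler_pdivlMr // mul1r mulNr addrC subr_ge0 //.
have T1 : k1 * A j1 + (-1) * B j1 = 0.
  by rewrite /k1 mulN1r divfK ?subrr // gt_eqF.
have T2 : (- k2) * A j2 + 1 * B j2 = 0.
  by rewrite /k2 mul1r mulNr divfK ?addNr // gt_eqF.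
have k12 : k2 <= k1 by apply: le_trans (Hmin _ Hj1) _.
case: (ltP (k1 * Xa + (-1) * Xb) 0) => H1.
  by exists k1, (-1); split => //; exists j1.
case: (ltP ((- k2) * Xa + 1 * Xb) 0) => H2.
  by exists (- k2), 1; split => //; exists j2.
exfalso.
case: (eqVneq k1 k2) => [Ek|Nk].
- suff : k1 = 0 /\ (-1 : R) = 0 by move=> [_ /eqP]; rewrite oppr_eq0 oner_eq0.
  apply: (Hind k1 (-1)) => j; apply/eqP; rewrite eq_le V1 andbT.
  case: (eqVneq (A j) 0) => [Aj|/HAj Aj]; first by rewrite Aj HAB // !mulr0 addr0.
  have := Hmin _ Aj; rewrite -Ek ler_pdivlMr // mulN1r subr_le0 //.
- have : k2 < k1 by rewrite lt_neqAle k12 andbT eq_sym.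
  move=> Hk; have : 0 <= (k1 - k2) * Xa by nra.
  rewrite pmulr_rge0 ?subr_gt0 // => /(lt_le_trans HX); by rewrite ltxx.
Qed.

End Poly.

Set Implicit Arguments. Unset Strict Implicit. Unset Printing Implicit Defensive.

Section RL.
Variables (R : realType) (d : nat) (V : seq 'rV[R]_d).
Local Notation vec := 'rV[R]_d.
Local Notation n := (size V).
Local Notation p := (fun j : 'I_(size V) => nth 0 V j).
Local Notation P := (cvs V).
Hypothesis Hd : (0 < d)%N.
Hypothesis HE1 : forall z, (forall j : 'I_(size V), valz z (nth 0 V j) = 0) -> z = 0.

Lemma valz0 x : valz (0 : 'cV[R]_(d + 1)) x = 0.
Proof. by rewrite /valz mulmx0 mxE. Qed.

Lemma Hn : (0 < n)%N.
Proof.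
rewrite lt0n; apply/negP => /eqP Hs.
have := HE1 (z := zc 0 (-1)) => /(_ _) H.
have /H : forall j : 'I_n, valz (zc 0 (-1)) (nth 0 V j) = 0.
  by move=> j; exfalso; have := ltn_ord j; rewrite {2}Hs.
move=> /(congr1 (fun z => valz z 0)); rewrite valz_zc valz0 dotp0.
by move/eqP; rewrite sub0r opprK oner_eq0.
Qed.

Lemma exists_zb z : z != 0 -> (\rank (Mt V z) < d)%N ->
  exists z', Mt V z *m z' = 0 /\
    forall al be, al *: z + be *: z' = 0 -> al = 0 /\ be = 0.
Proof.
move=> Hz Hr; pose K := kermx (Mt V z)^T.
have rK : (1 < \rank K)%N.
  rewrite /K mxrank_ker mxrank_tr; move: Hr; lia.
have [i Hi] : exists i, ~~ (row i K <= z^T)%MS.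
  apply/row_subPn; apply/negP => S; have := mxrankS S.
  have := rank_leq_row z^T; move: rK; lia.
exists (row i K)^T; split.
- apply: trmx_inj; rewrite trmx_mul trmxK trmx0 -row_mul mulmx_ker row0 //.
- move=> al be Hab; case: (eqVneq be 0) => [Hbe|Hbe].
    move: Hab; rewrite Hbe scale0r addr0 => /eqP; rewrite scaler_eq0 (negPf Hz) orbF.
    by move/eqP.
  exfalso; move/negP: Hi; apply.
  have -> : row i K = (- (al / be)) *: z^T.
    apply: trmx_inj; rewrite linearZ /= trmxK.
    apply: (scalerI Hbe); rewrite scalerA mulrN mulrCA divff // mulr1 scaleNr.
    by apply/eqP; rewrite -subr_eq0 opprK addrC Hab.
  by rewrite scalemx_sub.
Qed.

Lemma Mt_incr z z1 (j1 : 'I_n) : (forall j : 'I_n, tight z j -> tight z1 j) -> tight z1 j1 ->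
  ~~ tight z j1 -> (\rank (Mt V z) < \rank (Mt V z1))%N.
Proof.
move=> Hsub Ht1 Hn1.
have S : (Mt V z <= Mt V z1)%MS.
  apply/row_subP => j; rewrite rowMt; case: (boolP (tight z j)) => Hj.
  - by rewrite scale1r; apply: (eq_row_sub j); rewrite rowMt Hsub // scale1r.
  - by rewrite scale0r sub0mx.
rewrite ltn_neqAle (mxrankS S) andbT ((mxrank_leqif_sup S).2).
apply/negP => S'; move/negP: Hn1; apply; apply/eqP.
apply: (sub_Mt_val (z := z)); last by apply: Mt_mul => j /eqP.
by apply: submx_trans S'; apply: (eq_row_sub j1); rewrite rowMt Ht1 scale1r.
Qed.

Lemma RL z x : validz V z -> valz z x < 0 ->
  exists z0, [/\ validz V z0, valz z0 x < 0, forall j : 'I_n, tight z j -> tight z0 j &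
                \rank (Mt V z0) = d].
Proof.
suff H : forall N z, (d - \rank (Mt V z) <= N)%N -> validz V z -> valz z x < 0 ->
  exists z0, [/\ validz V z0, valz z0 x < 0, forall j : 'I_n, tight z j -> tight z0 j &
                \rank (Mt V z0) = d] by apply: H.
elim=> [|N IH] {}z HN Hz Hx.
  have Hz0 : z != 0 by apply/eqP => E; move: Hx; rewrite E valz0 ltxx.
  exists z; split => //; apply/eqP; rewrite eqn_leq rankMt //.
  by move: HN; rewrite leqn0 subn_eq0.
have Hz0 : z != 0 by apply/eqP => E; move: Hx; rewrite E valz0 ltxx.
case: (ltnP (\rank (Mt V z)) d) => Hr; last first.
  by exists z; split => //; apply/eqP; rewrite eqn_leq rankMt.
have [z' [Hz' Hind]] := exists_zb Hz0 Hr.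
have [al [be [Hv Hneg [j1 [Hj1 Ht1]]]]] :=
  @twoD R _ (fun j => valz z (nth 0 V j)) (fun j => valz z' (nth 0 V j)) (valz z x) (valz z' x)
    Hz (fun j Hj => Mt_mul_inv Hz' (introT eqP Hj))
    (fun al be Hab => Hind al be (HE1 (fun j => etrans (etrans (valzD _ _ _) (congr2 +%R (valzZ _ _ _) (valzZ _ _ _))) (Hab j))))
    Hx.
set z1 := al *: z + be *: z'.
have val1 y : valz z1 y = al * valz z y + be * valz z' y by rewrite valzD !valzZ.
have Hsub : forall j : 'I_n, tight z j -> tight z1 j.
  move=> j Hj; rewrite /tight val1 (eqP Hj) (Mt_mul_inv Hz' Hj) !mulr0 addr0 //.
have Hinc : (\rank (Mt V z) < \rank (Mt V z1))%N.
  apply: (Mt_incr Hsub (j1 := j1)); first by rewrite /tight val1 Ht1.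
  by rewrite /tight gt_eqF.
have [z0 [H1 H2 H3 H4]] : exists z0, [/\ validz V z0, valz z0 x < 0,
    forall j : 'I_n, tight z1 j -> tight z0 j & \rank (Mt V z0) = d].
  apply: IH; first by move: HN Hinc; lia.
  - by move=> j; rewrite val1.
  - by rewrite val1.
by exists z0; split => // j /Hsub /H3.
Qed.

End RL.

Set Implicit Arguments. Unset Strict Implicit. Unset Printing Implicit Defensive.

Section Facet.
Variables (R : realType) (d : nat) (V : seq 'rV[R]_d).
Local Notation vec := 'rV[R]_d.
Local Notation n := (size V).
Local Notation p := (fun j : 'I_(size V) => nth 0 V j).
Local Notation P := (cvs V).
Hypothesis Hd : (0 < d)%N.
Hypothesis HE1 : forall z, (forall j : 'I_(size V), valz z (nth 0 V j) = 0) -> z = 0.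

Definition Gz (z : 'cV[R]_(d + 1)) : set vec := [set y | P y /\ dotp y (zb z) = zk z].

Lemma valid_P z : validz V z -> valid_ineq P (zb z) (zk z).
Proof. by move=> Hz y Py; have := validz_P Hz Py; rewrite valzE subr_ge0. Qed.

Lemma aff_dotp (G : set vec) a k y : (forall g, G g -> dotp g a = k) -> aff G y -> dotp y a = k.
Proof.
move=> HG [m [q [lam [Gq H1 ->]]]]; rewrite dotp_sum.
under eq_bigr => i _ do rewrite HG //.
by rewrite -mulr_suml H1 mul1r.
Qed.

Lemma aff_indep_rank z : validz V z ->
  aff_indep_in (Gz z) (\rank (Mt V z)).
Proof.
move=> Hz; set f := maxrankfun (Mt V z).
have Hfree := maxrowsub_free (Mt V z); rewrite -/f in Hfree.
have Hrow : rowsub f (Mt V z) = \matrix_i ((tight z (f i))%:R *: aug (nth 0 V (f i))).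
  by apply/row_matrixP => i; rewrite row_rowsub !rowK.
have Htight i : tight z (f i).
  apply/negPn/negP => Hn1.
  have : (delta_mx 0 i : 'rV[R]_(\rank (Mt V z))) *m rowsub f (Mt V z) == 0.
    by rewrite -rowE row_rowsub rowMt (negPf Hn1) scale0r.
  rewrite mulmx_free_eq0 // => /eqP /matrixP /(_ 0 i); rewrite !mxE !eqxx /=.
  by move/eqP; rewrite oner_eq0.
exists (fun i => nth 0 V (f i)); split.
  move=> i; split; first exact: cvs_nth.
  by have := Htight i; rewrite /tight valzE subr_eq0 => /eqP.
move=> lam H0 H1.
have : (\row_i lam i) *m rowsub f (Mt V z) == 0.
  rewrite Hrow mul_aug_mx.
  under eq_bigr => i _ do rewrite Htight mulr1 mxE.
  under [X in row_mx _ X%:M]eq_bigr => i _ do rewrite Htight mulr1 mxE.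
  by rewrite H0 H1 (raddf0 (@scalar_mx R 1)) row_mx0.
rewrite mulmx_free_eq0 // => /eqP /matrixP H i.
by have := H 0 i; rewrite !mxE.
Qed.

Lemma RL_facet z0 x : validz V z0 -> valz z0 x < 0 -> \rank (Mt V z0) = d ->
  facet P (Gz z0) /\ facet_hyp P (Gz z0) (zb z0) (zk z0).
Proof.
move=> Hz Hx Hr.
have Hval := valid_P Hz.
have Hb : zb z0 != 0.
  apply/negP => /eqP Hb.
  have := Hz (Ordinal (Hn HE1)); rewrite valzE Hb dotp_a0.
  by move: Hx; rewrite valzE Hb dotp_a0 => H1 H2; have := lt_le_trans H1 H2; rewrite ltxx.
have Haff : forall y, aff (Gz z0) y <-> dotp y (zb z0) = zk z0.
  move=> y; split; first by apply: aff_dotp => g [].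
  move=> Hy.
  have S : (Mt V z0 <= kermx z0)%MS by apply/sub_kermxP; apply: Mt_mul => j /eqP.
  have z0n : z0 != 0 by apply/eqP => E; move: Hx; rewrite E valz0 ltxx.
  have S' : (kermx z0 <= Mt V z0)%MS.
    by rewrite -((mxrank_leqif_sup S).2) rank_kerz // Hr.
  have : (aug y <= Mt V z0)%MS.
    apply: submx_trans S'; apply/sub_kermxP; apply/eqP.
    by rewrite aug_mul0 valzE Hy subrr.
  move=> /sub_Mt [lam [Hl0 Hl1 Hy']].
  have [j1 Hj1] : exists j1 : 'I_n, tight z0 j1.
    apply/not_existsP => Hn1; move: Hl1; rewrite big1 => [/eqP|j _]; first by rewrite eq_sym oner_eq0.
    by apply: Hl0; apply/negP; apply: Hn1.
  exists n, (fun j => if tight z0 j then nth 0 V j else nth 0 V j1), lam; split => //.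
  - move=> j; case: ifP => Hj; (split; [exact: cvs_nth|]).
    + by move: Hj; rewrite /tight valzE subr_eq0 => /eqP.
    + by move: Hj1; rewrite /tight valzE subr_eq0 => /eqP.
  - rewrite Hy'; apply: eq_bigr => j _; case: ifP => // /negbT /Hl0 ->.
    by rewrite !scale0r.
have HGP : Gz z0 <> P.
  move=> E; have z0n : z0 != 0 by apply/eqP => E'; move: Hx; rewrite E' valz0 ltxx.
  have [j Hj] : exists j : 'I_n, valz z0 (nth 0 V j) != 0.
    case: (pselect (exists j : 'I_n, valz z0 (nth 0 V j) != 0)) => // Hne.
    exfalso; move/eqP: z0n; apply; apply: HE1 => j.
    apply/eqP/negPn/negP => Hj; apply: Hne; by exists j.
  have : Gz z0 (nth 0 V j) by rewrite E; exact: cvs_nth.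
  by move=> [_ Hd']; move: Hj; rewrite valzE Hd' subrr eqxx.
split; last by split.
split => //.
- by exists (zb z0), (zk z0).
- exists d; split.
  + by rewrite subrK.
  + by have := aff_indep_rank Hz; rewrite Hr.
  + move=> [q [Gq Hind]].
    have [lam [H1 H2 [i Hi]]] := hyp_dep Hb (fun i => (Gq i).2).
    by move/eqP: Hi; apply; apply: Hind.
Qed.

End Facet.

Set Implicit Arguments. Unset Strict Implicit. Unset Printing Implicit Defensive.

Section Transfer.
Variables (R : realType) (d : nat) (V : seq 'rV[R]_d).
Local Notation vec := 'rV[R]_d.
Local Notation n := (size V).
Local Notation p := (fun j : 'I_(size V) => nth 0 V j).
Local Notation P := (cvs V).
Local Notation cvec := 'cV[R]_(d + 1).
Hypothesis Hd : (0 < d)%N.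
Hypothesis HE1 : forall z, (forall j : 'I_(size V), valz z (nth 0 V j) = 0) -> z = 0.

Lemma valz2 z (a b : R) (x y : vec) : a + b = 1 ->
  valz z (a *: x + b *: y) = a * valz z x + b * valz z y.
Proof.
move=> H; rewrite !valzE dotpD !dotpZ.
have -> : a = 1 - b by rewrite -H addrK.
ring.
Qed.

Lemma tight_valid z (j : 'I_n) : tight z j -> valz z (nth 0 V j) = 0.
Proof. by move/eqP. Qed.

Definition facz (z0 : cvec) := facet P (Gz V z0) /\ facet_hyp P (Gz V z0) (zb z0) (zk z0).

Lemma beyond z x : validz V z -> valz z x < 0 ->
  exists z0, [/\ validz V z0, forall j : 'I_n, tight z j -> tight z0 j,
     valz z0 x < 0 & facz z0].
Proof.
move=> Hz Hx; have [z0 [H1 H2 H3 H4]] := RL Hd HE1 Hz Hx.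
by exists z0; split => //; apply: (RL_facet HE1 H1 H2 H4).
Qed.

Lemma beneath z x (j0 : 'I_n) : validz V z -> tight z j0 -> 0 < valz z x ->
  exists z0, [/\ validz V z0, forall j : 'I_n, tight z j -> tight z0 j,
     0 < valz z0 x & facz z0].
Proof.
move=> Hz Hj0 Hx.
set x' := 2 *: nth 0 V j0 + (-1) *: x.
have E y : valz y x' = 2 * valz y (nth 0 V j0) - valz y x.
  by rewrite valz2 ?mulN1r //; lra.
have Hx' : valz z x' < 0 by rewrite E (tight_valid Hj0) mulr0 sub0r oppr_lt0.
have [z0 [H1 H2 H3 H4]] := beyond Hz Hx'.
exists z0; split => //.
by move: H3; rewrite E (tight_valid (H2 _ Hj0)) mulr0 sub0r oppr_lt0.
Qed.

Lemma push z z0 x : validz V z -> validz V z0 ->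
  (forall j : 'I_n, tight z j -> tight z0 j) -> valz z0 x != 0 ->
  exists z', [/\ validz V z', forall j : 'I_n, tight z' j = tight z j &
      (0 < valz z' x <-> 0 < valz z0 x) /\ (valz z' x < 0 <-> valz z0 x < 0)].
Proof.
move=> Hz Hz0 Hsub Hx.
set c := valz z0 x.
set lam := (`|valz z x| + 1) / `|c|.
have Hc : 0 < `|c| by rewrite normr_gt0.
have Hl : 0 < lam by rewrite divr_gt0 // ltr_wpDl.
exists (z + lam *: z0).
have Ev y : valz (z + lam *: z0) y = valz z y + lam * valz z0 y by rewrite valzD valzZ.
split.
- move=> j; rewrite Ev; apply: addr_ge0 => //; apply: mulr_ge0 => //; exact: ltW.
- move=> j; rewrite /tight Ev; apply/idP/idP => [/eqP H|/eqP H].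
  + apply/eqP; have := Hz j; have := Hz0 j => h1 h2.
    have : lam * valz z0 (nth 0 V j) >= 0 by apply: mulr_ge0 => //; exact: ltW.
    by move=> h3; lra.
  + by rewrite H (eqP (Hsub j _)) ?mulr0 ?addr0 //; apply/eqP.
- rewrite Ev -/c.
  case: (ltrgt0P c) => Hc'.
  + have -> : lam * c = `|valz z x| + 1 by rewrite /lam (gtr0_norm Hc') divfK // gt_eqF.
    have h := ler_norm (- valz z x); rewrite normrN in h.
    split; split => H; lra.
  + have -> : lam * c = - (`|valz z x| + 1).
      by rewrite /lam (ltr0_norm Hc') invrN mulrN mulNr divfK // lt_eqF.
    have h := ler_norm (valz z x).
    split; split => H; lra.
  + by move: Hx; rewrite -/c Hc' eqxx.
Qed.

Lemma interp z1 z2 x : validz V z1 -> validz V z2 ->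
  (forall j : 'I_n, tight z1 j = tight z2 j) -> 0 < valz z1 x -> valz z2 x < 0 ->
  exists z', [/\ validz V z', forall j : 'I_n, tight z' j = tight z1 j & valz z' x = 0].
Proof.
move=> H1 H2 Ht Hx1 Hx2.
set a := - valz z2 x; set b := valz z1 x.
have Ha : 0 < a by rewrite oppr_gt0.
exists (a *: z1 + b *: z2).
have Ev y : valz (a *: z1 + b *: z2) y = a * valz z1 y + b * valz z2 y by rewrite valzD !valzZ.
split.
- move=> j; rewrite Ev; apply: addr_ge0; apply: mulr_ge0 => //; exact: ltW.
- move=> j; rewrite /tight Ev; apply/idP/idP => [/eqP H|/eqP H].
  + have h1 := H1 j; have h2 := H2 j.
    have h3 : 0 <= a * valz z1 (nth 0 V j) by apply: mulr_ge0 => //; exact: ltW.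
    have h4 : 0 <= b * valz z2 (nth 0 V j) by apply: mulr_ge0 => //; exact: ltW.
    have : a * valz z1 (nth 0 V j) = 0 by lra.
    by move/eqP; rewrite mulf_eq0 gt_eqF.
  + have Hj : tight z1 j by apply/eqP.
    by move: (Hj); rewrite Ht => /eqP ->; rewrite H !mulr0 addr0.
- by rewrite Ev /a /b; ring.
Qed.

Lemma perturb z zb' : validz V z -> Mt V z *m zb' = 0 ->
  exists e, 0 < e /\ forall s, `|s| <= 1 ->
    validz V (z + (s * e) *: zb') /\ forall j : 'I_n, tight (z + (s * e) *: zb') j = tight z j.
Proof.
move=> Hz Hzb.
have Key : exists e, 0 < e /\ forall j : 'I_n, 0 < valz z (nth 0 V j) ->
    e * (`|valz zb' (nth 0 V j)| + 1) <= valz z (nth 0 V j).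
  case: (pselect (exists j : 'I_n, 0 < valz z (nth 0 V j))) => [[j0 Hj0]|Hno]; last first.
    by exists 1; split => // j Hj; exfalso; apply: Hno; exists j.
  have [j1 [Hj1 Hmin]] := @argmin_ex R _ (fun j : 'I_n => 0 < valz z (nth 0 V j))
      (fun j => valz z (nth 0 V j) / (`|valz zb' (nth 0 V j)| + 1)) j0 Hj0.
  exists (valz z (nth 0 V j1) / (`|valz zb' (nth 0 V j1)| + 1)); split.
    by apply: divr_gt0 => //; apply: ltr_wpDl.
  move=> j Hj; rewrite -ler_pdivlMr; first exact: Hmin.
  by apply: ltr_wpDl.
have [e [He Hle]] := Key.
exists e; split => // s Hs.
have Ev y : valz (z + (s * e) *: zb') y = valz z y + s * e * valz zb' y by rewrite valzD valzZ.
have Hpos (j : 'I_n) : 0 < valz z (nth 0 V j) -> 0 < valz (z + (s * e) *: zb') (nth 0 V j).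
  move=> Hj; rewrite Ev; have := Hle j Hj.
  have : `|s * e * valz zb' (nth 0 V j)| <= e * `|valz zb' (nth 0 V j)|.
    rewrite !normrM (gtr0_norm He) -mulrA; apply: ler_piMl => //.
    by apply: mulr_ge0 => //; apply: ltW.
  have := ler_norm (- (s * e * valz zb' (nth 0 V j))); rewrite normrN.
  move=> h1 h2 h3; nra.
have Ht (j : 'I_n) : tight z j -> valz (z + (s * e) *: zb') (nth 0 V j) = 0.
  by move=> Hj; rewrite Ev (tight_valid Hj) (Mt_mul_inv Hzb Hj) mulr0 addr0.
split.
- move=> j; case: (eqVneq (valz z (nth 0 V j)) 0) => [H0|H0].
  + by rewrite Ht //; apply/eqP.
  + by apply: ltW; apply: Hpos; rewrite lt_def H0 Hz.
- move=> j; apply/idP/idP => H.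
  + apply/negPn/negP => Hn0; move/eqP: H; apply/eqP; rewrite gt_eqF // Hpos //.
    by rewrite lt_def Hn0 Hz.
  + by apply/eqP; apply: Ht.
Qed.

Lemma sep z x : ~~ (aug x <= Mt V z)%MS -> exists z', Mt V z *m z' = 0 /\ valz z' x != 0.
Proof.
rewrite submxE => /rV0Pn [j Hj].
exists (col j (cokermx (Mt V z))); split.
- by rewrite colE mulmxA mulmx_coker mul0mx.
- have E (A : 'M[R]_(1, d + 1)) : (col j A) 0 0 = A 0 j by rewrite mxE.
  rewrite /valz colE mulmxA -colE E; exact: Hj.
Qed.

End Transfer.

Set Implicit Arguments. Unset Strict Implicit. Unset Printing Implicit Defensive.

Section Transfer2.
Variables (R : realType) (d : nat) (V : seq 'rV[R]_d).
Local Notation vec := 'rV[R]_d.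
Local Notation n := (size V).
Local Notation P := (cvs V).
Local Notation cvec := 'cV[R]_(d + 1).
Hypothesis Hd : (0 < d)%N.
Hypothesis HE1 : forall z, (forall j : 'I_(size V), valz z (nth 0 V j) = 0) -> z = 0.
Variables (v w : vec).
Hypothesis SA : forall z0, facz V z0 ->
  (0 < valz z0 v <-> 0 < valz z0 w) /\ (valz z0 v < 0 <-> valz z0 w < 0).
Hypothesis Sw : exists zS, validz V zS /\ valz zS w < 0.

Lemma zone_val (y : vec) : valz (zc 0 (-1)) y = 1.
Proof. by rewrite valz_zc dotp_a0 sub0r opprK. Qed.

Lemma transfer z : validz V z -> 0 <= valz z v ->
  exists z', [/\ validz V z', forall j : 'I_n, tight z' j = tight z j,
     0 <= valz z' w & (valz z' w = 0 <-> valz z v = 0)].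
Proof.
move=> Hz Hv0.
case: (pselect (exists j0 : 'I_n, tight z j0)) => [[j0 Hj0]|Hnt]; last first.
  have Hnt' : forall j : 'I_n, tight z j = false.
    by move=> j; apply/negP => Hj; apply: Hnt; exists j.
  case: (eqVneq (valz z v) 0) => Hv.
  - have [zS [HS HSw]] := Sw.
    exists (zS + (- valz zS w) *: zc 0 (-1)).
    have Ev y : valz (zS + (- valz zS w) *: zc 0 (-1)) y = valz zS y - valz zS w.
      by rewrite valzD valzZ zone_val mulr1.
    split.
    + by move=> j; rewrite Ev; have := HS j; lra.
    + move=> j; rewrite Hnt' /tight Ev; apply/negbTE; rewrite gt_eqF //.
      by have := HS j; lra.
    + by rewrite Ev subrr.
    + by rewrite Ev subrr Hv.
  - exists (zc 0 (-1)); split.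
    + by move=> j; rewrite zone_val.
    + by move=> j; rewrite Hnt' /tight zone_val oner_eq0.
    + by rewrite zone_val.
    + rewrite zone_val; split => [/eqP|/eqP]; [by rewrite oner_eq0|by rewrite (negPf Hv)].
case: (ltgtP 0 (valz z v)) Hv0 => // Hv _.
- have [z1 [H1 H2 H3 H4]] := beneath Hd HE1 Hz Hj0 Hv.
  have Hw1 : 0 < valz z1 w by apply/(SA H4).1.
  have [z' [H1' H2' [H3' H4']]] := push Hz H1 H2 (negbT (gt_eqF Hw1)).
  exists z'; split => //.
  + by apply: ltW; apply/H3'.
  + split => E; first by move: (H3'.2 Hw1); rewrite E ltxx.
    by move: Hv; rewrite E ltxx.
- (* valz z v = 0 *)
  case: (boolP (aug w <= Mt V z)%MS) => Hw.
    have Hzz : Mt V z *m z = 0 by apply: Mt_mul => j /eqP.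
    exists z; split => //.
    + by rewrite (sub_Mt_val Hw Hzz).
    + by rewrite (sub_Mt_val Hw Hzz) -Hv.
  case: (boolP (aug v <= Mt V z)%MS) => Hvm.
  + exfalso.
    have [zb' [Hzb Hzbw]] := sep Hw.
    have [e [He Hpert]] := perturb Hz Hzb.
    have [z3 [H31 H32 H33]] : exists z3, [/\ validz V z3, forall j : 'I_n, tight z3 j = tight z j &
        valz z3 w != 0].
      case: (eqVneq (valz z w) 0) => Hzw; last by exists z; split.
      have [Hp1 Hp2] := Hpert 1 ltac:(by rewrite normr1); exists (z + (1 * e) *: zb'); split => //.
      by rewrite valzD valzZ Hzw add0r mul1r mulf_neq0 // gt_eqF.
    have Hsubz1 z1 : (forall j : 'I_n, tight z3 j -> tight z1 j) -> valz z1 v = 0.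
      move=> Hs; apply: (sub_Mt_val Hvm); apply: Mt_mul => j Hj; apply/eqP; apply: Hs.
      by rewrite H32.
    case: (ltgtP 0 (valz z3 w)) H33 => // Hz3 _.
    * have [z1 [H1 H2 H3 H4]] := beneath Hd HE1 H31 (j0 := j0) ltac:(by rewrite H32) Hz3.
      have := (SA H4).1; rewrite (Hsubz1 _ H2) ltxx => /iffRL /(_ H3) //.
    * have [z1 [H1 H2 H3 H4]] := beyond Hd HE1 H31 Hz3.
      have := (SA H4).2; rewrite (Hsubz1 _ H2) ltxx => /iffRL /(_ H3) //.
  + have [zb' [Hzb Hzbv]] := sep Hvm.
    have [e [He Hpert]] := perturb Hz Hzb.
    have [Hpa Hpb] := Hpert 1 ltac:(by rewrite normr1).
    have [Hma Hmb] := Hpert (-1) ltac:(by rewrite normrN normr1).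
    set zp := z + (1 * e) *: zb'; set zm := z + (-1 * e) *: zb'.
    have Evp : valz zp v = e * valz zb' v by rewrite valzD valzZ -Hv add0r mul1r.
    have Evm : valz zm v = - (e * valz zb' v) by rewrite valzD valzZ -Hv add0r mulN1r mulNr.
    have Hne : e * valz zb' v != 0 by rewrite mulf_neq0 // gt_eqF.
    have [zpos [zneg [Hpos1 Hpos2 Hpos3 [Hneg1 Hneg2 Hneg3]]]] :
      exists zpos zneg, [/\ validz V zpos, forall j : 'I_n, tight zpos j = tight z j,
        0 < valz zpos v & [/\ validz V zneg, forall j : 'I_n, tight zneg j = tight z j &
        valz zneg v < 0]].
      case: (ltgtP 0 (e * valz zb' v)) Hne => // H _.
      * by exists zp, zm; split => //; [rewrite Evp|split => //; rewrite Evm oppr_lt0].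
      * by exists zm, zp; split => //; [rewrite Evm oppr_gt0|split => //; rewrite Evp].
    have [z1 [H1 H2 H3 H4]] := beneath Hd HE1 Hpos1 (j0 := j0) ltac:(by rewrite Hpos2) Hpos3.
    have Hw1 : 0 < valz z1 w by apply/(SA H4).1.
    have [z1' [H1' H2' [H3' _]]] := push Hpos1 H1 H2 (negbT (gt_eqF Hw1)).
    have [z2 [K1 K2 K3 K4]] := beyond Hd HE1 Hneg1 Hneg3.
    have Hw2 : valz z2 w < 0 by apply/(SA K4).2.
    have [z2' [K1' K2' [_ K3']]] := push Hneg1 K1 K2 (negbT (lt_eqF Hw2)).
    have [z' [L1 L2 L3]] := interp H1' K1' (fun j => etrans (H2' j) (etrans (Hpos2 j) (esym (etrans (K2' j) (Hneg2 j)))))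
      (H3'.2 Hw1) (K3'.2 Hw2).
    exists z'; split => //.
    * by move=> j; rewrite L2 H2' Hpos2.
    * by rewrite L3.
    * by rewrite L3 -Hv.
Qed.

End Transfer2.

Set Implicit Arguments. Unset Strict Implicit. Unset Printing Implicit Defensive.

Section QFaces.
Variables (R : realType) (d : nat) (V : seq 'rV[R]_d) (v : 'rV[R]_d).
Local Notation vec := 'rV[R]_d.
Local Notation P := (cvs V).
Local Notation Q := (conv (cvs V `|` [set v])).

Lemma tight_comb m (lam : 'I_m -> R) (q : 'I_m -> vec) c k :
  (forall i, 0 <= lam i) -> \sum_i lam i = 1 -> (forall i, k <= dotp (q i) c) ->
  dotp (\sum_i lam i *: q i) c = k -> forall i, lam i != 0 -> dotp (q i) c = k.
Proof.
move=> H0 H1 Hq; rewrite dotp_sum => Hs.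
have : \sum_i lam i * (dotp (q i) c - k) == 0.
  under eq_bigr => i _ do rewrite mulrBr.
  by rewrite sumrB Hs -mulr_suml H1 mul1r subrr.
rewrite psumr_eq0 => [/allP Hall i Hi|i _]; last by apply: mulr_ge0; rewrite ?subr_ge0.
have /implyP := Hall i (mem_index_enum _).
rewrite mulf_eq0 (negPf Hi) /= subr_eq0 => /(_ isT) /eqP //.
Qed.

Lemma P_conv : conv P `<=` P.
Proof. by apply: conv_sub. Qed.

Lemma Q_conv : conv Q `<=` Q.
Proof. by rewrite cvs_cons; apply: conv_sub. Qed.

Lemma P_Q : P `<=` Q.
Proof. by move=> x Px; apply: conv_ext; left. Qed.

Lemma v_Q : Q v.
Proof. by apply: conv_ext; right. Qed.

Lemma Q_valid c k : valid_ineq Q c k <-> valid_ineq P c k /\ k <= dotp v c.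
Proof.
split.
- by move=> H; split; [move=> x /P_Q /H|apply: H; exact: v_Q].
- move=> [H1 H2]; apply: conv_valid => x [/H1 //|-> //].
Qed.

Definition facedata (G : set vec) c k :=
  [/\ valid_ineq P c k, k <= dotp v c & G = [set x | Q x /\ dotp x c = k]].

Lemma face_data G : face Q G -> exists c k, facedata G c k.
Proof. by move=> [c [k [/Q_valid [H1 H2] ->]]]; exists c, k. Qed.

Lemma sum1_nz m (lam : 'I_m -> R) : \sum_i lam i = 1 -> exists i, lam i != 0.
Proof.
move=> H; case: (pselect (exists i, lam i != 0)) => // Hn; exfalso.
move: H; rewrite big1 => [/eqP|i _]; first by rewrite eq_sym oner_eq0.
by apply/eqP/negPn/negP => Hi; apply: Hn; exists i.
Qed.

Lemma face_notv G c k : facedata G c k -> ~ G v -> G `<=` P.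
Proof.
move=> [H1 H2 EG] Hv x; rewrite {1}EG => -[[m [q [lam [Xq H0 Hl ->]]]] Hx].
have Hval : forall i, k <= dotp (q i) c by move=> i; case: (Xq i) => [/H1|->].
have Ht := tight_comb H0 Hl Hval Hx.
have Hq i : lam i != 0 -> P (q i).
  move=> Hi; case: (Xq i) => // Eq; exfalso; apply: Hv; rewrite EG; split; first exact: v_Q.
  by rewrite -Eq; apply: Ht.
have [i0 Hi0] := sum1_nz Hl.
apply: P_conv; exists m, (fun i => if lam i != 0 then q i else q i0), lam; split => //.
- by move=> i; case: ifP => H; apply: Hq.
- apply: eq_bigr => i _; case: ifP => // /negbFE/eqP ->; by rewrite !scale0r.
Qed.

Lemma face_withv G c k : facedata G c k -> G `<=` conv ((G `&` P) `|` [set v]).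
Proof.
move=> [H1 H2 EG] x; rewrite {1}EG => -[[m [q [lam [Xq H0 Hl ->]]]] Hx].
have Hval : forall i, k <= dotp (q i) c by move=> i; case: (Xq i) => [/H1|->].
have Ht := tight_comb H0 Hl Hval Hx.
exists m, (fun i => if lam i != 0 then q i else v), lam; split => //.
- move=> i; case: ifP => Hi; last by right.
  case: (Xq i) => [Pq|->]; last by right.
  by left; split => //; rewrite EG; split; [exact: P_Q|exact: Ht].
- apply: eq_bigr => i _; case: ifP => // /negbFE/eqP ->; by rewrite !scale0r.
Qed.

Lemma face_conv G c k : facedata G c k -> conv G `<=` G.
Proof.
move=> [H1 H2 EG] x Hx; rewrite EG; split.
- by apply: Q_conv; apply: (conv_mono _ Hx); rewrite EG => y [].
- move: Hx => [m [q [lam [Gq H0 Hl ->]]]]; rewrite dotp_sum.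
  under eq_bigr => i _ do rewrite (_ : dotp (q i) c = k) ?(proj2 (eq_ind _ (fun S => S (q i)) (Gq i) _ EG)) //.
  by rewrite -mulr_suml Hl mul1r.
Qed.

Lemma face_order G1 G2 : face Q G1 -> face Q G2 ->
  (G1 `<=` G2 <-> (G1 `&` P `<=` G2 `&` P /\ (G1 v -> G2 v))).
Proof.
move=> /face_data [c1 [k1 D1]] /face_data [c2 [k2 D2]]; split.
- by move=> S; split; [move=> x [/S]|apply: S].
- move=> [S Sv]; case: (pselect (G1 v)) => Hv.
  + move=> x /(face_withv D1) Hx; apply: (face_conv D2); apply: (conv_mono _ Hx).
    by move=> y [/S [] //|->]; apply: Sv.
  + move=> x Hx; have Px := face_notv D1 Hv Hx.
    by have [] := S x (conj Hx Px).
Qed.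

End QFaces.

Set Implicit Arguments. Unset Strict Implicit. Unset Printing Implicit Defensive.

Section Hyp.
Variables (R : realType) (d : nat) (V : seq 'rV[R]_d).
Local Notation vec := 'rV[R]_d.
Local Notation P := (cvs V).
Hypothesis HE1 : forall z, (forall j : 'I_(size V), valz z (nth 0 V j) = 0) -> z = 0.

Lemma exists_above a k : a != 0 -> valid_ineq P a k -> exists q, P q /\ k < dotp q a.
Proof.
move=> Ha Hv.
case: (pselect (exists j : 'I_(size V), dotp (nth 0 V j) a != k)) => [[j Hj]|Hn].
  exists (nth 0 V j); split; first exact: cvs_nth.
  by rewrite lt_def Hj Hv //; exact: cvs_nth.
exfalso; have E : zc a k = 0.
  apply: HE1 => j; rewrite valz_zc; apply/eqP; rewrite subr_eq0.
  apply/negPn/negP => H; apply: Hn; by exists j.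
by have := zc_neq0 k Ha; rewrite E eqxx.
Qed.

Lemma hyp_pos G a k a' k' x : facet_hyp P G a k -> facet_hyp P G a' k' ->
  k < dotp x a -> k' < dotp x a'.
Proof.
move=> [Ha Hva Hia] [Ha' Hva' Hia'] Hx.
have [q [Pq Hq]] := exists_above Ha Hva.
have Hq' : k' < dotp q a'.
  rewrite lt_def Hva' // andbT; apply/eqP => E.
  by move: Hq; rewrite (proj1 (Hia q) (proj2 (Hia' q) E)) ltxx.
rewrite ltNge; apply/negP => Hx'.
set al := dotp q a' - k'; set be := dotp x a' - k'.
have Hal : 0 < al by rewrite subr_gt0.
have Hbe : be <= 0 by rewrite subr_le0.
have Hab0 : 0 < al - be by lra.
have Hab : al - be != 0 by rewrite gt_eqF.
set t := al / (al - be); set s := - be / (al - be).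
have Hts : t + s = 1 by rewrite /t /s -mulrDl divff.
set y := t *: x + s *: q.
have Ey b : dotp y b = t * dotp x b + s * dotp q b by rewrite /y dotpD !dotpZ.
have Hy : dotp y a' = k'.
  rewrite Ey; have -> : dotp x a' = be + k' by rewrite /be subrK.
  have -> : dotp q a' = al + k' by rewrite /al subrK.
  rewrite /t /s; field; exact: Hab.
have := proj2 (Hia' y) Hy => /(proj1 (Hia y)).
rewrite Ey => E.
have Ht : 0 < t by rewrite /t divr_gt0.
have Hs : 0 <= s by rewrite /s divr_ge0 ?oppr_ge0 // ltW.
have : k < t * dotp x a + s * dotp q a.
  have -> : k = t * k + s * k by rewrite -mulrDl Hts mul1r.
  by apply: ltr_leD; [rewrite ltr_pM2l|rewrite ler_wpM2l // ltW].
by rewrite E ltxx.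
Qed.

Lemma hyp_eq G a k a' k' x : facet_hyp P G a k -> facet_hyp P G a' k' ->
  dotp x a' = k' -> dotp x a = k.
Proof. by move=> [_ _ H] [_ _ H'] /H'/H. Qed.

Lemma hyp_neg G a k a' k' x : facet_hyp P G a k -> facet_hyp P G a' k' ->
  dotp x a' < k' -> dotp x a < k.
Proof.
move=> H H' Hx; case: (ltgtP (dotp x a) k) => // E.
- by have := hyp_pos H H' E; rewrite ltNge ltW.
- by move: Hx; rewrite (hyp_eq H' H E) ltxx.
Qed.

Lemma VS_sign S Fs Ns x G a k : VS P S Fs Ns x -> facet P G -> facet_hyp P G a k ->
  [/\ (G = S \/ Ns G) -> dotp x a < k, Fs G -> dotp x a = k &
      G <> S -> ~ Fs G -> ~ Ns G -> k < dotp x a].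
Proof.
move=> [HS HN HF HO] HG Hh; split.
- move=> [EGS|/HN [a' [k' [H' Hx]]]].
  + move: HS => [a' [k' [H' Hx]]]; rewrite -EGS in H'; exact: hyp_neg Hh H' Hx.
  + exact: hyp_neg Hh H' Hx.
- by move=> /HF [a' [k' [H' Hx]]]; apply: hyp_eq Hh H' Hx.
- by move=> H1 H2 H3; have [a' [k' [H' Hx]]] := HO G HG H1 H2 H3; apply: hyp_pos H' Hh Hx.
Qed.

End Hyp.

Set Implicit Arguments. Unset Strict Implicit. Unset Printing Implicit Defensive.

Section QT.
Variables (R : realType) (d : nat) (V : seq 'rV[R]_d).
Local Notation vec := 'rV[R]_d.
Local Notation P := (cvs V).
Hypothesis Hd : (0 < d)%N.
Hypothesis HE1 : forall z, (forall j : 'I_(size V), valz z (nth 0 V j) = 0) -> z = 0.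
Variables (v w : vec).
Hypothesis SA : forall z0, facz V z0 ->
  (0 < valz z0 v <-> 0 < valz z0 w) /\ (valz z0 v < 0 <-> valz z0 w < 0).
Hypothesis Sw : exists zS, validz V zS /\ valz zS w < 0.

Lemma validz_of c k : valid_ineq P c k -> validz V (zc c k).
Proof. by move=> H j; rewrite valz_zc subr_ge0; apply: H; exact: cvs_nth. Qed.

Lemma Q_transfer G : face (conv (P `|` [set v])) G ->
  exists G', [/\ face (conv (P `|` [set w])) G', G' `&` P = G `&` P & (G' w <-> G v)].
Proof.
move=> /face_data [c [k]]; rewrite /facedata => -[Hval Hkv EG].
have Hz := validz_of Hval.
have Hv0 : 0 <= valz (zc c k) v by rewrite valz_zc subr_ge0.
have [z' [H1 H2 H3 H4]] := transfer Hd HE1 SA Sw Hz Hv0.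
have HF := Fz_eq H1 Hz H2.
exists [set x | conv (P `|` [set w]) x /\ dotp x (zb z') = zk z']; split.
- exists (zb z'), (zk z'); split => //; apply/Q_valid; split; first exact: valid_P.
  by move: H3; rewrite valzE subr_ge0.
- apply/seteqP; split => x [Gx Px]; split => //.
  + move: Gx => [Qx Ex].
    rewrite EG; split; first exact: P_Q.
    have : Fz V z' x by split => //; rewrite valzE Ex subrr.
    by rewrite HF => -[_]; rewrite valz_zc => /eqP; rewrite subr_eq0 => /eqP.
  + split; first exact: P_Q.
    move: Gx; rewrite EG => -[_ Ex].
    have : Fz V (zc c k) x by split => //; rewrite valz_zc Ex subrr.
    by rewrite -HF => -[_]; rewrite valzE => /eqP; rewrite subr_eq0 => /eqP.
- rewrite EG; split.
  + move=> [_ E]; split; first exact: v_Q.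
    by apply/eqP; rewrite -subr_eq0 -valz_zc; apply/eqP; apply/H4; rewrite valzE E subrr.
  + move=> [_ E]; split; first exact: v_Q.
    by apply/eqP; rewrite -subr_eq0 -valzE; apply/eqP; apply/H4; rewrite valz_zc E subrr.
Qed.

End QT.

Unset Implicit Arguments.
Set Strict Implicit.


Lemma sign_iff (R : realType) (x y k : R) :
  (x < k /\ y < k) \/ (x = k /\ y = k) \/ (k < x /\ k < y) ->
  (0 < x - k <-> 0 < y - k) /\ (x - k < 0 <-> y - k < 0).
Proof. move=> [[H1 H2]|[[H1 H2]|[H1 H2]]]; split; split => h; lra. Qed.

Theorem proposition2p3 (R : realType) (d : nat) (P S : set 'rV[R]_d)
    (Fs Ns : set (set 'rV[R]_d)) :
  polytope P -> has_dim P d%:Z -> simplex_facet P S ->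
  Fs `<=` adj P S -> Ns `<=` adj P S -> Fs `&` Ns = set0 ->
  VS P S Fs Ns !=set0 ->
  forall v w : 'rV[R]_d, VS P S Fs Ns v -> VS P S Fs Ns w ->
    comb_equiv (conv (P `|` [set v])) (conv (P `|` [set w])).
Proof.
move=> [V EP] Hdim _ _ _ _ _ v w Hv Hw.
subst P; rewrite cvs_seq in Hdim Hv Hw *.
have Hd : (0 < d)%N.
  case: (Hv) => [[a [l [[Ha _ _] _]]] _ _ _].
  rewrite lt0n; apply/negP => /eqP E0; move/eqP: Ha; apply.
  by apply/matrixP => i j; exfalso; have := ltn_ord j; rewrite {2}E0.
have HE1 : forall z, (forall j : 'I_(size V), valz z (nth 0 V j) = 0) -> z = 0.
  move=> z Hz.
  have [n [Hn Hind _]] := Hdim.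
  have En : n = d.+1 by move: Hn; lia.
  subst n; case: Hind => q [Pq Hq].
  have Hall y : cvs V y -> dotp y (zb z) = zk z.
    move=> [lam [H0 H1 ->]]; apply/eqP; rewrite -subr_eq0 -valzE valz_aff //.
    by apply/eqP; apply: big1 => j _; rewrite Hz mulr0.
  case: (eqVneq (zb z) 0) => Ha.
  - have Hk : zk z = 0 by rewrite -(Hall _ (Pq ord0)) Ha dotp_a0.
    by rewrite -(zcK z) Ha Hk /zc trmx0 (raddf0 (@scalar_mx _ 1)) oppr0 col_mx0.
  - have [lam [H1 H2 [i Hi]]] := hyp_dep Ha (fun i => Hall _ (Pq i)).
    by exfalso; move/eqP: Hi; apply; apply: Hq.
have Sx x : VS (cvs V) S Fs Ns x -> exists zS, validz V zS /\ valz zS x < 0.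
  case=> [[a [l [[Ha Hval _] Hlt]]] _ _ _]; exists (zc a l); split.
  - exact: validz_of Hval.
  - by rewrite valz_zc subr_lt0.
have SA : forall z0, facz V z0 ->
    (0 < valz z0 v <-> 0 < valz z0 w) /\ (valz z0 v < 0 <-> valz z0 w < 0).
  move=> z0 [HG Hh].
  have [v1 v2 v3] := VS_sign HE1 Hv HG Hh.
  have [w1 w2 w3] := VS_sign HE1 Hw HG Hh.
  rewrite !valzE; apply: sign_iff.
  case: (pselect (Gz V z0 = S \/ Ns (Gz V z0))) => C1; first by left; split; [apply: v1|apply: w1].
  case: (pselect (Fs (Gz V z0))) => C2; first by right; left; split; [apply: v2|apply: w2].
  have C1a : Gz V z0 <> S by move=> E; apply: C1; left.
  have C1b : ~ Ns (Gz V z0) by move=> E; apply: C1; right.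
  by right; right; split; [apply: v3|apply: w3].
have SA' : forall z0, facz V z0 ->
    (0 < valz z0 w <-> 0 < valz z0 v) /\ (valz z0 w < 0 <-> valz z0 v < 0).
  by move=> z0 /SA [h1 h2]; split; apply: iff_sym.
pose Rel (G G' : set 'rV[R]_d) := [/\ face (conv (cvs V `|` [set w])) G',
   G' `&` cvs V = G `&` cvs V & (G' w <-> G v)].
pose f G := match pselect (exists G', Rel G G') with
  | left H => projT1 (cid H) | right _ => set0 end.
have fP : forall G, (exists G', Rel G G') -> Rel G (f G).
  by move=> G H; rewrite /f; case: pselect => // H'; exact: (projT2 (cid H')).
have uniq : forall G G1 G2, Rel G G1 -> Rel G G2 -> G1 = G2.
  move=> G G1 G2 [F1 E1 I1] [F2 E2 I2]; apply/seteqP; split.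
  - suff H : G1 `&` cvs V `<=` G2 `&` cvs V /\ (G1 w -> G2 w) by exact: (proj2 (face_order F1 F2) H).
    by rewrite E1 E2; split => // h; apply/I2; apply/I1.
  - suff H : G2 `&` cvs V `<=` G1 `&` cvs V /\ (G2 w -> G1 w) by exact: (proj2 (face_order F2 F1) H).
    by rewrite E1 E2; split => // h; apply/I1; apply/I2.
exists f; split.
- move=> F HF; have [G' HG'] := Q_transfer Hd HE1 SA (Sx w Hw) HF.
  by have [] := fP F (ex_intro _ G' HG').
- move=> G HG; have [F [HF E I]] := Q_transfer Hd HE1 SA' (Sx v Hv) HG.
  exists F; split => //.
  have R1 : Rel F G by split => //; apply: iff_sym.
  exact: uniq (fP F (ex_intro _ G R1)) R1.
- move=> F1 F2 H1 H2.
  have [A1 B1 C1] := fP F1 (Q_transfer Hd HE1 SA (Sx w Hw) H1).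
  have [A2 B2 C2] := fP F2 (Q_transfer Hd HE1 SA (Sx w Hw) H2).
  apply: (iff_trans (face_order H1 H2)); apply: iff_sym.
  apply: (iff_trans (face_order A1 A2)); rewrite B1 B2.
  split => -[S1 T]; split => // h.
  + by apply/C2; apply: T; apply/C1.
  + by apply/C2; apply: T; apply/C1.
Qed.
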